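(* For every integer $w\ge 2$ and every $y\in[(1-2^{-w})^{1/2},1)$, \[g(y,w)\le K_w\, g\big((1-2^{-w})^{1/2},w\big)=0.15\,K_w\,\alpha^{-l_w}\,w\,(2c)^{-w}\left(1-2^{-w}\right)^{-1},\] where $K_2=1.11614$, $K_3=1.03$, $K_4=1.01$ and $K_w=1$ for all $w\ge 5$. In particular $K_{w+1}\le K_w$ for all $w\ge 2$.
   Context: Constants: $c=0.7$, $\alpha=1-10^{-4}$, $\psi=13/10$, $\chi=1/2$, and for a positive integer $w$, $l_w=\lceil\log_6(w+1)\rceil$. The function $g$ is \[g(y,w)=c^{-w}\alpha^{-l_w}\,w\,\frac{1-y^2}{y^2}\left(1-(1-y^2)^{1/w}\right)\left(\psi-\left(\frac{(1-y^2)^{1/w}}{1-(1-y^2)^{1/w}}\right)^{\chi}\right).\] *)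

(* Defs.v *)
From Stdlib Require Import Reals.
From mathcomp Require prime.
Open Scope R_scope.

Definition c : R := 7/10.
Definition alpha : R := 1 - / 10 ^ 4.
Definition psi : R := 13/10.
Definition chi : R := 1/2.

(* l_w = ceil(log_6(w+1)) = smallest natural e with w+1 <= 6^e *)
Definition lw (w : nat) : nat := prime.up_log 6 (w + 1).

Definition tw (y : R) (w : nat) : R := Rpower (1 - y ^ 2) (1 / INR w).

Definition g (y : R) (w : nat) : R :=
  Rpower c (- INR w) * Rpower alpha (- INR (lw w)) * INR w
  * ((1 - y ^ 2) / y ^ 2) * (1 - tw y w)
  * (psi - Rpower (tw y w / (1 - tw y w)) chi).

Definition Kw (w : nat) : R :=
  match w with
  | 2%nat => 111614 / 100000
  | 3%nat => 103 / 100
  | 4%nat => 101 / 100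
  | _ => 1
  end.

(* Main.v *)
Require Import Defs.
From Stdlib Require Import Reals Lra Lia Psatz.
Open Scope R_scope.
Ltac pos := match goal with
 | |- 0 <= _ + _ => apply Rplus_le_le_0_compat; pos
 | |- 0 <= _ * (_ ^ _ * _ ^ _) => apply Rmult_le_pos; [lra | apply Rmult_le_pos; apply pow_le; lra]
end.
Lemma poly5_0 u : (0) <= u <= (1) -> 0 <= 15/100*(1+u^2)^6 - 32*u^10*(13/10-u).
Proof. intros H. replace (15/100*(1+u^2)^6 - 32*u^10*(13/10-u)) with ((3/20) * ((u - (0))^0 * ((1) - u)^12) + (9/5) * ((u - (0))^1 * ((1) - u)^11) + (54/5) * ((u - (0))^2 * ((1) - u)^10) + (42) * ((u - (0))^3 * ((1) - u)^9) + (117) * ((u - (0))^4 * ((1) - u)^8) + (1224/5) * ((u - (0))^5 * ((1) - u)^7) + (1968/5) * ((u - (0))^6 * ((1) - u)^6) + (2448/5) * ((u - (0))^7 * ((1) - u)^5) + (468) * ((u - (0))^8 * ((1) - u)^4) + (336) * ((u - (0))^9 * ((1) - u)^3) + (656/5) * ((u - (0))^10 * ((1) - u)^2) + (32/5) * ((u - (0))^11 * ((1) - u)^1)) by field. pos. Qed.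

Lemma poly5 u : (0) <= u <= (1) -> 0 <= 15/100*(1+u^2)^6 - 32*u^10*(13/10-u).
Proof. intros H. apply (poly5_0 u); lra. Qed.
Lemma poly2_0 u : (0) <= u <= (1/2) -> 0 <= 15/100*(111614/100000)*((1+u^2)^2 - u^4)*(1+u^2) - 3*u^4*(13/10-u).
Proof. intros H. replace (15/100*(111614/100000)*((1+u^2)^2 - u^4)*(1+u^2) - 3*u^4*(13/10-u)) with ((167421/31250) * ((u - (0))^0 * ((1/2) - u)^5) + (167421/6250) * ((u - (0))^1 * ((1/2) - u)^4) + (7199103/125000) * ((u - (0))^2 * ((1/2) - u)^3) + (8203629/125000) * ((u - (0))^3 * ((1/2) - u)^2) + (7927839/250000) * ((u - (0))^4 * ((1/2) - u)^1) + (262263/50000) * ((u - (0))^5 * ((1/2) - u)^0)) by field. pos. Qed.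

Lemma poly2_1 u : (1/2) <= u <= (3/4) -> 0 <= 15/100*(111614/100000)*((1+u^2)^2 - u^4)*(1+u^2) - 3*u^4*(13/10-u).
Proof. intros H. replace (15/100*(111614/100000)*((1+u^2)^2 - u^4)*(1+u^2) - 3*u^4*(13/10-u)) with ((524526/3125) * ((u - (1/2))^0 * ((3/4) - u)^5) + (11741886/15625) * ((u - (1/2))^1 * ((3/4) - u)^4) + (3929154/3125) * ((u - (1/2))^2 * ((3/4) - u)^3) + (2960943/3125) * ((u - (1/2))^3 * ((3/4) - u)^2) + (38179533/125000) * ((u - (1/2))^4 * ((3/4) - u)^1) + (173157/5000) * ((u - (1/2))^5 * ((3/4) - u)^0)) by field. pos. Qed.

Lemma poly2_2 u : (3/4) <= u <= (13/16) -> 0 <= 15/100*(111614/100000)*((1+u^2)^2 - u^4)*(1+u^2) - 3*u^4*(13/10-u).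
Proof. intros H. replace (15/100*(111614/100000)*((1+u^2)^2 - u^4)*(1+u^2) - 3*u^4*(13/10-u)) with ((22164096/625) * ((u - (3/4))^0 * ((13/16) - u)^5) + (2241394944/15625) * ((u - (3/4))^1 * ((13/16) - u)^4) + (699325296/3125) * ((u - (3/4))^2 * ((13/16) - u)^3) + (521450376/3125) * ((u - (3/4))^3 * ((13/16) - u)^2) + (1843226613/31250) * ((u - (3/4))^4 * ((13/16) - u)^1) + (9899379/1250) * ((u - (3/4))^5 * ((13/16) - u)^0)) by field. pos. Qed.

Lemma poly2_3 u : (13/16) <= u <= (27/32) -> 0 <= 15/100*(111614/100000)*((1+u^2)^2 - u^4)*(1+u^2) - 3*u^4*(13/10-u).
Proof. intros H. replace (15/100*(111614/100000)*((1+u^2)^2 - u^4)*(1+u^2) - 3*u^4*(13/10-u)) with ((158390064/625) * ((u - (13/16))^0 * ((27/32) - u)^5) + (14952324096/15625) * ((u - (13/16))^1 * ((27/32) - u)^4) + (21477548616/15625) * ((u - (13/16))^2 * ((27/32) - u)^3) + (14447704056/15625) * ((u - (13/16))^3 * ((27/32) - u)^2) + (4477611819/15625) * ((u - (13/16))^4 * ((27/32) - u)^1) + (514930758/15625) * ((u - (13/16))^5 * ((27/32) - u)^0)) by field. pos. Qed.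

Lemma poly2_4 u : (27/32) <= u <= (55/64) -> 0 <= 15/100*(111614/100000)*((1+u^2)^2 - u^4)*(1+u^2) - 3*u^4*(13/10-u).
Proof. intros H. replace (15/100*(111614/100000)*((1+u^2)^2 - u^4)*(1+u^2) - 3*u^4*(13/10-u)) with ((16477784256/15625) * ((u - (27/32))^0 * ((55/64) - u)^5) + (51941592816/15625) * ((u - (27/32))^1 * ((55/64) - u)^4) + (56481043584/15625) * ((u - (27/32))^2 * ((55/64) - u)^3) + (23168217288/15625) * ((u - (27/32))^3 * ((55/64) - u)^2) + (91193796/625) * ((u - (27/32))^4 * ((55/64) - u)^1) + (128909511/15625) * ((u - (27/32))^5 * ((55/64) - u)^0)) by field. pos. Qed.

Lemma poly2_5 u : (55/64) <= u <= (111/128) -> 0 <= 15/100*(111614/100000)*((1+u^2)^2 - u^4)*(1+u^2) - 3*u^4*(13/10-u).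
Proof. intros H. replace (15/100*(111614/100000)*((1+u^2)^2 - u^4)*(1+u^2) - 3*u^4*(13/10-u)) with ((67585709703168/15625) * ((u - (55/64))^0 * ((111/128) - u)^7) + (44416580714496/15625) * ((u - (55/64))^1 * ((111/128) - u)^6) + (857573108219904/15625) * ((u - (55/64))^2 * ((111/128) - u)^5) + (241145700286464/625) * ((u - (55/64))^3 * ((111/128) - u)^4) + (14061976298029056/15625) * ((u - (55/64))^4 * ((111/128) - u)^3) + (15342856894365696/15625) * ((u - (55/64))^5 * ((111/128) - u)^2) + (8119888898555904/15625) * ((u - (55/64))^6 * ((111/128) - u)^1) + (338221606453248/3125) * ((u - (55/64))^7 * ((111/128) - u)^0)) by field. pos. Qed.

Lemma poly2_6 u : (111/128) <= u <= (7/8) -> 0 <= 15/100*(111614/100000)*((1+u^2)^2 - u^4)*(1+u^2) - 3*u^4*(13/10-u).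
Proof. intros H. replace (15/100*(111614/100000)*((1+u^2)^2 - u^4)*(1+u^2) - 3*u^4*(13/10-u)) with ((20643408597/3125) * ((u - (111/128))^0 * ((7/8) - u)^5) + (743005828164/15625) * ((u - (111/128))^1 * ((7/8) - u)^4) + (2070272327424/15625) * ((u - (111/128))^2 * ((7/8) - u)^3) + (2787562051584/15625) * ((u - (111/128))^3 * ((7/8) - u)^2) + (1820264103936/15625) * ((u - (111/128))^4 * ((7/8) - u)^1) + (463185641472/15625) * ((u - (111/128))^5 * ((7/8) - u)^0)) by field. pos. Qed.

Lemma poly2_7 u : (7/8) <= u <= (1) -> 0 <= 15/100*(111614/100000)*((1+u^2)^2 - u^4)*(1+u^2) - 3*u^4*(13/10-u).
Proof. intros H. replace (15/100*(111614/100000)*((1+u^2)^2 - u^4)*(1+u^2) - 3*u^4*(13/10-u)) with ((1766913/62500) * ((u - (7/8))^0 * ((1) - u)^5) + (39087501/62500) * ((u - (7/8))^1 * ((1) - u)^4) + (68450016/15625) * ((u - (7/8))^2 * ((1) - u)^3) + (161626776/15625) * ((u - (7/8))^3 * ((1) - u)^2) + (155977344/15625) * ((u - (7/8))^4 * ((1) - u)^1) + (53517312/15625) * ((u - (7/8))^5 * ((1) - u)^0)) by field. pos. Qed.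

Lemma poly2 u : (0) <= u <= (1) -> 0 <= 15/100*(111614/100000)*((1+u^2)^2 - u^4)*(1+u^2) - 3*u^4*(13/10-u).
Proof. intros H. destruct (Rle_dec u (1/2)). { apply (poly2_0 u); lra. } destruct (Rle_dec u (3/4)). { apply (poly2_1 u); lra. } destruct (Rle_dec u (13/16)). { apply (poly2_2 u); lra. } destruct (Rle_dec u (27/32)). { apply (poly2_3 u); lra. } destruct (Rle_dec u (55/64)). { apply (poly2_4 u); lra. } destruct (Rle_dec u (111/128)). { apply (poly2_5 u); lra. } destruct (Rle_dec u (7/8)). { apply (poly2_6 u); lra. } apply (poly2_7 u); lra. Qed.
Lemma poly3_0 u : (0) <= u <= (1/2) -> 0 <= 15/100*(103/100)*((1+u^2)^3 - u^6)*(1+u^2) - 7*u^6*(13/10-u).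
Proof. intros H. replace (15/100*(103/100)*((1+u^2)^3 - u^6)*(1+u^2) - 7*u^6*(13/10-u)) with ((2472/125) * ((u - (0))^0 * ((1/2) - u)^7) + (17304/125) * ((u - (0))^1 * ((1/2) - u)^6) + (54384/125) * ((u - (0))^2 * ((1/2) - u)^5) + (19776/25) * ((u - (0))^3 * ((1/2) - u)^4) + (112167/125) * ((u - (0))^4 * ((1/2) - u)^3) + (79413/125) * ((u - (0))^5 * ((1/2) - u)^2) + (242287/1000) * ((u - (0))^6 * ((1/2) - u)^1) + (7339/200) * ((u - (0))^7 * ((1/2) - u)^0)) by field. pos. Qed.

Lemma poly3_1 u : (1/2) <= u <= (3/4) -> 0 <= 15/100*(103/100)*((1+u^2)^3 - u^6)*(1+u^2) - 7*u^6*(13/10-u).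
Proof. intros H. replace (15/100*(103/100)*((1+u^2)^3 - u^6)*(1+u^2) - 7*u^6*(13/10-u)) with ((117424/25) * ((u - (1/2))^0 * ((3/4) - u)^7) + (4226464/125) * ((u - (1/2))^1 * ((3/4) - u)^6) + (12837972/125) * ((u - (1/2))^2 * ((3/4) - u)^5) + (21200508/125) * ((u - (1/2))^3 * ((3/4) - u)^4) + (20395713/125) * ((u - (1/2))^4 * ((3/4) - u)^3) + (11318052/125) * ((u - (1/2))^5 * ((3/4) - u)^2) + (13272051/500) * ((u - (1/2))^6 * ((3/4) - u)^1) + (63147/20) * ((u - (1/2))^7 * ((3/4) - u)^0)) by field. pos. Qed.

Lemma poly3_2 u : (3/4) <= u <= (7/8) -> 0 <= 15/100*(103/100)*((1+u^2)^3 - u^6)*(1+u^2) - 7*u^6*(13/10-u).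
Proof. intros H. replace (15/100*(103/100)*((1+u^2)^3 - u^6)*(1+u^2) - 7*u^6*(13/10-u)) with ((2020704/5) * ((u - (3/4))^0 * ((7/8) - u)^7) + (318081984/125) * ((u - (3/4))^1 * ((7/8) - u)^6) + (167591784/25) * ((u - (3/4))^2 * ((7/8) - u)^5) + (1190485032/125) * ((u - (3/4))^3 * ((7/8) - u)^4) + (977885226/125) * ((u - (3/4))^4 * ((7/8) - u)^3) + (460325112/125) * ((u - (3/4))^5 * ((7/8) - u)^2) + (228073783/250) * ((u - (3/4))^6 * ((7/8) - u)^1) + (23014769/250) * ((u - (3/4))^7 * ((7/8) - u)^0)) by field. pos. Qed.

Lemma poly3_3 u : (7/8) <= u <= (1) -> 0 <= 15/100*(103/100)*((1+u^2)^3 - u^6)*(1+u^2) - 7*u^6*(13/10-u).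
Proof. intros H. replace (15/100*(103/100)*((1+u^2)^3 - u^6)*(1+u^2) - 7*u^6*(13/10-u)) with ((5891780864/125) * ((u - (7/8))^0 * ((1) - u)^10) + (8354677248/25) * ((u - (7/8))^1 * ((1) - u)^9) + (23984572416/25) * ((u - (7/8))^2 * ((1) - u)^8) + (170718750208/125) * ((u - (7/8))^3 * ((1) - u)^7) + (111040104192/125) * ((u - (7/8))^4 * ((1) - u)^6) + (18384531456/125) * ((u - (7/8))^5 * ((1) - u)^5) + (33067220992/125) * ((u - (7/8))^6 * ((1) - u)^4) + (107799379968/125) * ((u - (7/8))^7 * ((1) - u)^3) + (21840789504/25) * ((u - (7/8))^8 * ((1) - u)^2) + (9781116928/25) * ((u - (7/8))^9 * ((1) - u)^1) + (8455716864/125) * ((u - (7/8))^10 * ((1) - u)^0)) by field. pos. Qed.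

Lemma poly3 u : (0) <= u <= (1) -> 0 <= 15/100*(103/100)*((1+u^2)^3 - u^6)*(1+u^2) - 7*u^6*(13/10-u).
Proof. intros H. destruct (Rle_dec u (1/2)). { apply (poly3_0 u); lra. } destruct (Rle_dec u (3/4)). { apply (poly3_1 u); lra. } destruct (Rle_dec u (7/8)). { apply (poly3_2 u); lra. } apply (poly3_3 u); lra. Qed.
Lemma poly4_0 u : (0) <= u <= (1) -> 0 <= 15/100*(101/100)*((1+u^2)^4 - u^8)*(1+u^2) - 15*u^8*(13/10-u).
Proof. intros H. replace (15/100*(101/100)*((1+u^2)^4 - u^8)*(1+u^2) - 15*u^8*(13/10-u)) with ((303/2000) * ((u - (0))^0 * ((1) - u)^12) + (909/500) * ((u - (0))^1 * ((1) - u)^11) + (21513/2000) * ((u - (0))^2 * ((1) - u)^10) + (8181/200) * ((u - (0))^3 * ((1) - u)^9) + (22119/200) * ((u - (0))^4 * ((1) - u)^8) + (27876/125) * ((u - (0))^5 * ((1) - u)^7) + (85749/250) * ((u - (0))^6 * ((1) - u)^6) + (50601/125) * ((u - (0))^7 * ((1) - u)^5) + (687897/2000) * ((u - (0))^8 * ((1) - u)^4) + (89397/500) * ((u - (0))^9 * ((1) - u)^3) + (16347/400) * ((u - (0))^10 * ((1) - u)^2) + (27/1000) * ((u - (0))^11 * ((1) - u)^1) + (9/200) * ((u - (0))^12 * ((1) - u)^0)) by field. pos. Qed.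

Lemma poly4 u : (0) <= u <= (1) -> 0 <= 15/100*(101/100)*((1+u^2)^4 - u^8)*(1+u^2) - 15*u^8*(13/10-u).
Proof. intros H. apply (poly4_0 u); lra. Qed.

Lemma core2 u : 0 < u <= 1 ->
  (2^2 - 1) * (u^2/(1+u^2))^2 * ((1 - u^2/(1+u^2)) * (13/10 - u))
  <= 15/100 * (111614/100000) * (1 - (u^2/(1+u^2))^2).
Proof.
  intros H. assert (HD : 0 < 1 + u^2) by nra.
  pose proof (poly2 u ltac:(lra)) as P.
  apply Rmult_le_reg_r with ((1+u^2)^3). apply pow_lt; lra.
  replace ((2^2 - 1) * (u^2/(1+u^2))^2 * ((1 - u^2/(1+u^2)) * (13/10 - u)) * (1+u^2)^3)
    with (3*u^4*(13/10-u)) by (field; lra).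
  replace (15/100 * (111614/100000) * (1 - (u^2/(1+u^2))^2) * (1+u^2)^3)
    with (15/100*(111614/100000)*((1+u^2)^2 - u^4)*(1+u^2)) by (field; lra).
  lra.
Qed.

Lemma core3 u : 0 < u <= 1 ->
  (2^3 - 1) * (u^2/(1+u^2))^3 * ((1 - u^2/(1+u^2)) * (13/10 - u))
  <= 15/100 * (103/100) * (1 - (u^2/(1+u^2))^3).
Proof.
  intros H. assert (HD : 0 < 1 + u^2) by nra.
  pose proof (poly3 u ltac:(lra)) as P.
  apply Rmult_le_reg_r with ((1+u^2)^4). apply pow_lt; lra.
  replace ((2^3 - 1) * (u^2/(1+u^2))^3 * ((1 - u^2/(1+u^2)) * (13/10 - u)) * (1+u^2)^4)
    with (7*u^6*(13/10-u)) by (field; lra).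
  replace (15/100 * (103/100) * (1 - (u^2/(1+u^2))^3) * (1+u^2)^4)
    with (15/100*(103/100)*((1+u^2)^3 - u^6)*(1+u^2)) by (field; lra).
  lra.
Qed.

Lemma core4 u : 0 < u <= 1 ->
  (2^4 - 1) * (u^2/(1+u^2))^4 * ((1 - u^2/(1+u^2)) * (13/10 - u))
  <= 15/100 * (101/100) * (1 - (u^2/(1+u^2))^4).
Proof.
  intros H. assert (HD : 0 < 1 + u^2) by nra.
  pose proof (poly4 u ltac:(lra)) as P.
  apply Rmult_le_reg_r with ((1+u^2)^5). apply pow_lt; lra.
  replace ((2^4 - 1) * (u^2/(1+u^2))^4 * ((1 - u^2/(1+u^2)) * (13/10 - u)) * (1+u^2)^5)
    with (15*u^8*(13/10-u)) by (field; lra).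
  replace (15/100 * (101/100) * (1 - (u^2/(1+u^2))^4) * (1+u^2)^5)
    with (15/100*(101/100)*((1+u^2)^4 - u^8)*(1+u^2)) by (field; lra).
  lra.
Qed.

Lemma core5a u : 0 < u <= 1 ->
  (2 * (u^2/(1+u^2)))^5 * ((1 - u^2/(1+u^2)) * (13/10 - u)) <= 15/100.
Proof.
  intros H. assert (HD : 0 < 1 + u^2) by nra.
  pose proof (poly5 u ltac:(lra)) as P.
  apply Rmult_le_reg_r with ((1+u^2)^6). apply pow_lt; lra.
  replace ((2 * (u^2/(1+u^2)))^5 * ((1 - u^2/(1+u^2)) * (13/10 - u)) * (1+u^2)^6)
    with (32*u^10*(13/10-u)) by (field; lra).
  lra.
Qed.

Lemma core5b u : 0 < u <= 1 ->
  15/100 <= (1 - u^2/(1+u^2)) * (13/10 - u).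
Proof.
  intros H. assert (HD : 0 < 1 + u^2) by nra.
  replace ((1 - u^2/(1+u^2)) * (13/10 - u)) with (15/100 + ((1-u)*(115/100+15/100*u)) / (1+u^2)) by (field; lra).
  assert (0 <= ((1-u)*(115/100+15/100*u)) / (1+u^2)).
  { apply Rmult_le_pos. nra. apply Rlt_le, Rinv_0_lt_compat; lra. }
  lra.
Qed.

Lemma core_gen (w : nat) u : (5 <= w)%nat -> 0 < u <= 1 ->
  (2^w - 1) * (u^2/(1+u^2))^w * ((1 - u^2/(1+u^2)) * (13/10 - u))
  <= 15/100 * 1 * (1 - (u^2/(1+u^2))^w).
Proof.
  intros Hw H. assert (HD : 0 < 1 + u^2) by nra.
  set (t := u^2/(1+u^2)). set (X := (1 - t) * (13/10 - u)).
  assert (Ht : 0 < t <= 1/2). { unfold t. split. apply Rdiv_lt_0_compat; nra.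
    replace (u^2/(1+u^2)) with (1/2 - (1-u^2)/(2*(1+u^2))) by (field; lra).
    assert (0 <= (1-u^2)/(2*(1+u^2))). { apply Rmult_le_pos. nra. apply Rlt_le, Rinv_0_lt_compat; lra. }
    lra. }
  pose proof (core5a u H) as A. pose proof (core5b u H) as Bq. fold t X in A, Bq.
  assert (Hx : (2*t)^w <= (2*t)^5).
  { replace w with (5 + (w-5))%nat by lia. rewrite pow_add.
    assert (0 <= (2*t)^5) by (apply pow_le; lra).
    assert ((2*t)^(w-5) <= 1). { rewrite <- (pow1 (w-5)). apply pow_incr. lra. }
    nra. }
  assert (E : (2*t)^w = 2^w * t^w) by (apply Rpow_mult_distr).
  assert (Hs : 0 <= t^w) by (apply pow_le; lra).
  assert (H1 : (2*t)^w * X <= (2*t)^5 * X) by (apply Rmult_le_compat_r; lra).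
  rewrite E in H1.
  assert (H2 : t^w * (15/100) <= t^w * X) by (apply Rmult_le_compat_l; lra).
  nra.
Qed.

Lemma core (w : nat) u : (2 <= w)%nat -> 0 < u <= 1 ->
  (2^w - 1) * (u^2/(1+u^2))^w * ((1 - u^2/(1+u^2)) * (13/10 - u))
  <= 15/100 * Kw w * (1 - (u^2/(1+u^2))^w).
Proof.
  intros Hw H.
  destruct w as [|[|[|[|[|w]]]]]; try lia.
  - exact (core2 u H).
  - exact (core3 u H).
  - exact (core4 u H).
  - exact (core_gen (S (S (S (S (S w))))) u ltac:(lia) H).
Qed.

Lemma Rpower_one z : Rpower 1 z = 1.
Proof. unfold Rpower. rewrite ln_1, Rmult_0_r. apply exp_0. Qed.

Lemma root_w (s : R) (w : nat) : (1 <= w)%nat -> 0 < s -> (Rpower s (1 / INR w)) ^ w = s.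
Proof.
  intros Hw Hs. rewrite <- Rpower_pow by (unfold Rpower; apply exp_pos).
  rewrite Rpower_mult. replace (1 / INR w * INR w) with 1.
  apply Rpower_1; auto.
  field. apply not_0_INR. lia.
Qed.

Lemma root_half (w : nat) : (1 <= w)%nat -> Rpower (/ 2 ^ w) (1 / INR w) = / 2.
Proof.
  intros Hw. rewrite <- pow_inv, <- Rpower_pow by lra.
  rewrite Rpower_mult. replace (INR w * (1 / INR w)) with 1.
  apply Rpower_1; lra.
  field. apply not_0_INR. lia.
Qed.

Theorem lemma27 :
  forall w : nat, (2 <= w)%nat ->
    (forall y : R, sqrt (1 - / 2 ^ w) <= y < 1 ->
       g y w <= Kw w * g (sqrt (1 - / 2 ^ w)) w)
    /\ Kw w * g (sqrt (1 - / 2 ^ w)) w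
       = 15 / 100 * Kw w * Rpower alpha (- INR (lw w)) * INR w
         * Rpower (2 * c) (- INR w) * / (1 - / 2 ^ w)
    /\ Kw (S w) <= Kw w.
Proof.
  intros w Hw.
  set (B := 2 ^ w).
  assert (HB : 4 <= B). { unfold B. replace 4 with (2^2) by ring. apply Rle_pow; [lra | lia]. }
  assert (HiB : 0 < / B <= 1/4).
  { split. apply Rinv_0_lt_compat; lra.
    apply Rmult_le_reg_r with B. lra. rewrite Rinv_l by lra. lra. }
  set (y0 := sqrt (1 - / B)).
  assert (Hy0 : 0 < y0) by (apply sqrt_lt_R0; lra).
  assert (Hy02 : y0 ^ 2 = 1 - / B) by (apply pow2_sqrt; lra).
  assert (Ht0 : tw y0 w = / 2).
  { unfold tw. rewrite Hy02. replace (1 - (1 - / B)) with (/ B) by ring.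
    apply root_half; lia. }
  set (C := Rpower c (- INR w) * Rpower alpha (- INR (lw w)) * INR w).
  assert (HC : 0 < C).
  { unfold C. apply Rmult_lt_0_compat. apply Rmult_lt_0_compat; unfold Rpower; apply exp_pos.
    apply lt_0_INR. lia. }
  assert (Hg0 : g y0 w = C * ((/ B) / (1 - / B)) * (1/2) * (3/10)).
  { unfold g. fold C. rewrite Ht0, Hy02.
    replace (/ 2 / (1 - / 2)) with 1 by field. rewrite Rpower_one.
    unfold psi. field. lra. }
  assert (HK : 0 < Kw w).
  { destruct w as [|[|[|[|[|w]]]]]; simpl; lra. }
  split; [| split].
  - intros y Hy.
    assert (Hyp : 0 < y) by lra.
    assert (Hy2 : y ^ 2 < 1) by nra.
    assert (Hy2b : y0 ^ 2 <= y ^ 2) by (apply pow_incr; lra).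
    set (s := 1 - y ^ 2).
    assert (Hs : 0 < s <= / B) by (unfold s; lra).
    set (t := tw y w).
    assert (Htp : 0 < t) by (unfold t, tw, Rpower; apply exp_pos).
    assert (Hts : t ^ w = s) by (unfold t, tw; fold s; apply root_w; [lia | lra]).
    assert (Hth : t <= / 2).
    { rewrite <- (root_half w) by lia. unfold t, tw. fold s.
      apply Rle_Rpower_l. apply Rlt_le, Rdiv_lt_0_compat; [lra | apply lt_0_INR; lia]. exact Hs. }
    set (u := Rpower (t / (1 - t)) chi).
    assert (Hu : u = sqrt (t / (1 - t))).
    { unfold u, chi. replace (1/2) with (/2) by field. apply Rpower_sqrt.
      apply Rdiv_lt_0_compat; lra. }
    assert (Hu0 : 0 < u) by (rewrite Hu; apply sqrt_lt_R0, Rdiv_lt_0_compat; lra).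
    assert (Hu2 : u ^ 2 = t / (1 - t)) by (rewrite Hu; apply pow2_sqrt, Rlt_le, Rdiv_lt_0_compat; lra).
    assert (Htu : t = u^2 / (1 + u^2)).
    { rewrite Hu2. field. lra. }
    assert (Hu1 : u <= 1).
    { assert (u^2 <= 1). { rewrite Hu2. apply Rmult_le_reg_r with (1 - t). lra.
        unfold Rdiv. rewrite Rmult_assoc, Rinv_l by lra. lra. }
      nra. }
    pose proof (core w u Hw (conj Hu0 Hu1)) as Hc. rewrite <- Htu in Hc.
    rewrite Hts in Hc. fold B in Hc.
    assert (Hgy : g y w = C * (s / (1 - s)) * ((1 - t) * (13/10 - u))).
    { unfold g. fold C. fold t. fold u. unfold psi. replace (y ^ 2) with (1 - s) by (unfold s; ring).
      replace (1 - (1 - s)) with s by ring. ring. }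
    rewrite Hgy. fold y0. rewrite Hg0.
    set (Z := (1 - t) * (13/10 - u)) in *.
    assert (E : Kw w * (C * (/ B / (1 - / B)) * (1 / 2) * (3 / 10)) - C * (s / (1 - s)) * Z
                = C * ((15/100 * Kw w * (1 - s) - (B - 1) * s * Z) / ((1 - s) * (B - 1)))).
    { field. lra. }
    assert (0 <= (15/100 * Kw w * (1 - s) - (B - 1) * s * Z) / ((1 - s) * (B - 1))).
    { apply Rmult_le_pos. lra. apply Rlt_le, Rinv_0_lt_compat. nra. }
    assert (0 <= C * ((15/100 * Kw w * (1 - s) - (B - 1) * s * Z) / ((1 - s) * (B - 1)))).
    { apply Rmult_le_pos; lra. }
    lra.
  - fold y0. rewrite Hg0. fold B.
    rewrite <- Rpower_mult_distr by (unfold c; lra).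
    rewrite (Rpower_Ropp 2), Rpower_pow by lra. fold B. fold C.
    unfold C. field. lra.
  - destruct w as [|[|[|[|[|w]]]]]; try lia; simpl; lra.
Qed.
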